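(* Consider the amortized variant of the algorithmic framework described below with parameters $\gamma\in(0,1)$, $\eta=\gamma^{-1}$ and $\xi=\gamma^{-1}+\tfrac13$. Then the framework maintains $\ell_i\le(1+\eta)T$ for every machine $i$, where $\ell_i=\sum_{j\in \hat J_i\cup\check J_i}p_j/s_i$ is the total load of machine $i$ and $T$ is the current guess.
   Context: Problem: machines $1,\dots,m$ with speeds $s_1\ge s_2\ge\dots\ge s_m>0$; jobs arrive online, job $j$ has size $p_j>0$; the load of job $j$ on machine $i$ is $p_j/s_i$. Framework (amortized variant): it keeps a guess $T$, for each machine $i$ a partition of its jobs into old jobs $\hat J_i$ and new jobs $\check J_i$, and a potential $\pi_i$ per machine. Machine $i$ is saturated if $\check\ell_i:=\sum_{j\in\check J_i}p_j/s_i\ge T$, and $\eta$-eligible for job $j$ if $p_j/s_i\le \eta T$. Let $\tilde{\mathcal M}(\eta,j)$ be the set of machines that are $\eta$-eligible for $j$ and not saturated. When the first job $j_1$ arrives, set $T=p_{j_1}/s_1$ and place $j_1$ on machine 1. When a later job $j^*$ arrives, put it into a priority queue $Q$ (larger size = higher priority) and run: while $Q$ is nonempty, remove the largest job $j'$ from $Q$; then repeat: if $\tilde{\mathcal M}(\eta,j')\ne\emptyset$, choose a slowest machine $i'$ in it, move every $j\in\hat J_{i'}$ with $p_j\ge \eta^{-1}p_{j'}$ from $\hat J_{i'}$ to $\check J_{i'}$, and if $i'$ is still not saturated stop repeating; otherwise set $T:=\xi T$ and for every machine $i$ move all jobs of $\check J_i$ to $\hat J_i$ and set $\pi_i=0$.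 After a machine $i'$ is found, set $\pi:=\gamma p_{j'}+\pi_{i'}$; go through the jobs $j\in\hat J_{i'}$ in non-increasing order of size and, whenever $p_j\le\pi$, set $\pi:=\pi-p_j$ and move $j$ from $\hat J_{i'}$ into $Q$ (removing it from $i'$). Finally add $j'$ to $\check J_{i'}$ and set $\pi_{i'}:=\pi$. *)

(* Defs.v *)
(* Model of the amortized framework as a nondeterministic
   transition system (ties in the priority queue, in "slowest machine" and
   in the non-increasing scan order are resolved arbitrarily). *)
From HB Require Import structures.
From mathcomp Require Import all_boot all_order all_algebra.
Set Implicit Arguments. Unset Strict Implicit. Unset Printing Implicit Defensive.
Import Order.TTheory GRing.Theory Num.Theory.
Local Open Scope ring_scope.

Section Framework.
Variables (R : realFieldType) (m : nat).
(* machines are 'I_m.+1 (ord0 = machine 1), speeds s, jobs are nat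
   (job k is the (k+1)-th arriving job) with sizes p *)
Variables (s : 'I_m.+1 -> R) (p : nat -> R) (gamma eta xi : R).

Record state := State {
  guess : R;
  old_jobs : 'I_m.+1 -> seq nat;   (* \hat J_i *)
  new_jobs : 'I_m.+1 -> seq nat;   (* \check J_i *)
  pot : 'I_m.+1 -> R;
  queue : seq nat;
  cur : option nat;                (* job j' currently being placed *)
  next_job : nat                   (* number of jobs arrived so far *)
}.

Definition new_load (st : state) (i : 'I_m.+1) : R :=
  \sum_(j <- new_jobs st i) p j / s i.

Definition load (st : state) (i : 'I_m.+1) : R :=
  \sum_(j <- old_jobs st i ++ new_jobs st i) p j / s i.

Definition saturated (st : state) (i : 'I_m.+1) : bool := guess st <= new_load st i.

Definition eligible (st : state) (i : 'I_m.+1) (j : nat) : bool :=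
  p j / s i <= eta * guess st.

Definition cand (st : state) (j : nat) (i : 'I_m.+1) : bool :=
  eligible st i j && ~~ saturated st i.

Fixpoint scan (pi : R) (l : seq nat) : R * seq nat :=
  match l with
  | [::] => (pi, [::])
  | k :: l' =>
      if p k <= pi then let r := scan (pi - p k) l' in (r.1, k :: r.2)
      else scan pi l'
  end.

Definition upd {T : Type} (f : 'I_m.+1 -> T) (i : 'I_m.+1) (x : T) :=
  fun k => if k == i then x else f k.

Definition init_state : state :=
  State (p 0%N / s ord0) (fun _ => [::])
        (fun i => if i == ord0 then [:: 0%N] else [::])
        (fun _ => 0) [::] None 1.

Inductive step : state -> state -> Prop :=
| step_arrive T hJ cJ pi n :
    step (State T hJ cJ pi [::] None n) (State T hJ cJ pi [:: n] None n.+1)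
| step_pop T hJ cJ pi Q n j :
    j \in Q -> (forall k, k \in Q -> p k <= p j) ->
    step (State T hJ cJ pi Q None n) (State T hJ cJ pi (rem j Q) (Some j) n)
| step_raise T hJ cJ pi Q n j :
    (forall i, ~~ cand (State T hJ cJ pi Q (Some j) n) j i) ->
    step (State T hJ cJ pi Q (Some j) n)
         (State (xi * T) (fun i => hJ i ++ cJ i) (fun _ => [::]) (fun _ => 0)
                Q (Some j) n)
| step_try_saturated T hJ cJ pi Q n j i :
    let st := State T hJ cJ pi Q (Some j) n in
    cand st j i -> (forall i2, cand st j i2 -> s i <= s i2) ->
    let hJ' := upd hJ i [seq k <- hJ i | ~~ (eta^-1 * p j <= p k)] in
    let cJ' := upd cJ i (cJ i ++ [seq k <- hJ i | eta^-1 * p j <= p k]) in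
    saturated (State T hJ' cJ' pi Q (Some j) n) i ->
    step st (State T hJ' cJ' pi Q (Some j) n)
| step_assign T hJ cJ pi Q n j i sc :
    let st := State T hJ cJ pi Q (Some j) n in
    cand st j i -> (forall i2, cand st j i2 -> s i <= s i2) ->
    let hJ' := upd hJ i [seq k <- hJ i | ~~ (eta^-1 * p j <= p k)] in
    let cJ' := upd cJ i (cJ i ++ [seq k <- hJ i | eta^-1 * p j <= p k]) in
    ~~ saturated (State T hJ' cJ' pi Q (Some j) n) i ->
    perm_eq sc (hJ' i) -> sorted (fun a b => p b <= p a) sc ->
    let r := scan (gamma * p j + pi i) sc in
    step st (State T (upd hJ' i [seq k <- hJ' i | k \notin r.2])
                   (upd cJ' i (cJ' i ++ [:: j])) (upd pi i r.1)
                   (Q ++ r.2) None n).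

Inductive reachable : state -> Prop :=
| reach_init : reachable init_state
| reach_step st st' : reachable st -> step st st' -> reachable st'.

End Framework.

(* Main.v *)
Require Import Defs.
From mathcomp Require Import all_boot all_order all_algebra.
From mathcomp Require Import ring lra.
Set Implicit Arguments. Unset Strict Implicit. Unset Printing Implicit Defensive.
Import Order.TTheory GRing.Theory Num.Theory.
Local Open Scope ring_scope.

Definition SS (R : realFieldType) (p : nat -> R) (l : seq nat) : R :=
  \sum_(j <- l) p j.

Lemma SS_cat (R : realFieldType) (p : nat -> R) l1 l2 :
  SS p (l1 ++ l2) = SS p l1 + SS p l2.
Proof. by rewrite /SS big_cat. Qed.

Lemma SS_cons (R : realFieldType) (p : nat -> R) x l :
  SS p (x :: l) = p x + SS p l.
Proof. by rewrite /SS big_cons. Qed.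

Lemma SS_nil (R : realFieldType) (p : nat -> R) : SS p [::] = 0.
Proof. by rewrite /SS big_nil. Qed.

Lemma SS_ge0 (R : realFieldType) (p : nat -> R) l :
  (forall k, 0 < p k) -> 0 <= SS p l.
Proof.
move=> pp; elim: l => [|x l IH]; first by rewrite SS_nil.
rewrite SS_cons; have := pp x; lra.
Qed.

Lemma SS_filter (R : realFieldType) (p : nat -> R) (a : pred nat) l :
  SS p l = SS p [seq x <- l | a x] + SS p [seq x <- l | ~~ a x].
Proof.
elim: l => [|x l IH] /=; first by rewrite !SS_nil addr0.
case: (a x) => /=; rewrite !SS_cons IH; lra.
Qed.

Lemma SS_mem (R : realFieldType) (p : nat -> R) x l :
  (forall k, 0 < p k) -> x \in l -> p x <= SS p l.
Proof.
move=> pp; elim: l => [|y l IH] //=; rewrite inE SS_cons => /orP [/eqP ->|xl].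
  have := SS_ge0 l pp; lra.
have := IH xl; have := pp y; lra.
Qed.

Lemma SS_subseq (R : realFieldType) (p : nat -> R) l1 l2 :
  (forall k, 0 < p k) -> subseq l1 l2 -> SS p l1 <= SS p l2.
Proof.
move=> pp /subseqP [m _ ->]; elim: l2 m => [|x l IH] [|b m] /=;
  rewrite ?SS_nil ?lexx //.
  have := SS_ge0 (x :: l) pp; lra.
case: b; rewrite !SS_cons; have := IH m; have := pp x; lra.
Qed.

Lemma SS_perm (R : realFieldType) (p : nat -> R) l1 l2 :
  perm_eq l1 l2 -> SS p l1 = SS p l2.
Proof. by move=> h; rewrite /SS (perm_big _ h). Qed.

Lemma scan_sum (R : realFieldType) (p : nat -> R) pi l :
  (scan p pi l).1 + SS p (scan p pi l).2 = pi.
Proof.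
elim: l pi => [|x l IH] pi /=; first by rewrite SS_nil addr0.
case: ifP => _ /=; last exact: IH.
rewrite SS_cons; have := IH (pi - p x); lra.
Qed.

Lemma scan_ge0 (R : realFieldType) (p : nat -> R) pi l :
  0 <= pi -> 0 <= (scan p pi l).1.
Proof.
elim: l pi => [|x l IH] pi //= h.
case: ifP => hx /=; last exact: IH.
apply: IH; lra.
Qed.

Lemma scan_le (R : realFieldType) (p : nat -> R) pi l :
  (forall k, 0 < p k) -> (scan p pi l).1 <= pi.
Proof.
move=> pp; elim: l pi => [|x l IH] pi //=.
case: ifP => hx /=; last exact: IH.
have := IH (pi - p x); have := pp x; lra.
Qed.

Lemma scan_skip (R : realFieldType) (p : nat -> R) pi l x :
  (forall k, 0 < p k) -> x \in l -> x \notin (scan p pi l).2 ->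
  (scan p pi l).1 < p x.
Proof.
move=> pp; elim: l pi => [|y l IH] pi //=; rewrite inE.
case: ifP => hy /=.
  rewrite inE negb_or => /orP [/eqP ->|xl]; first by rewrite eqxx.
  by case/andP => _; apply: IH.
case/orP => [/eqP ->|xl] hn; last exact: IH.
have := scan_le pi l pp; move: hy => /negbT; rewrite -ltNge; lra.
Qed.

Lemma scan_subseq (R : realFieldType) (p : nat -> R) pi l :
  subseq (scan p pi l).2 l.
Proof.
elim: l pi => [|y l IH] pi //=.
case: ifP => hy /=; first by rewrite eqxx IH.
exact: (subseq_trans (IH pi) (subseq_cons l y)).
Qed.

Lemma scan_head (R : realFieldType) (p : nat -> R) pi y l :
  p y <= pi -> y \in (scan p pi (y :: l)).2.
Proof. by move=> h /=; rewrite h /= mem_head. Qed.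

Definition EE (R : realFieldType) (g : R) := 1 + g^-1.
Definition XX (R : realFieldType) (g : R) := g^-1 + 3^-1.
Definition KK (R : realFieldType) (g : R) := EE g / XX g.

Lemma ginv_gt1 (R : realFieldType) (g : R) : 0 < g -> g < 1 -> 1 < g^-1.
Proof. by move=> g0 g1; rewrite invf_gt1. Qed.

Lemma XX_gt1 (R : realFieldType) (g : R) : 0 < g -> g < 1 -> 1 < XX g.
Proof.
move=> g0 g1; have := ginv_gt1 g0 g1; rewrite /XX.
have : 0 < 3^-1 :> R by rewrite invr_gt0.
lra.
Qed.

Lemma KX (R : realFieldType) (g : R) : 0 < g -> g < 1 -> KK g * XX g = EE g.
Proof.
move=> g0 g1; rewrite /KK -mulrA mulVf ?mulr1 //.
have := XX_gt1 g0 g1; apply: contraTneq => ->; lra.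
Qed.

Lemma KK_bounds (R : realFieldType) (g : R) : 0 < g -> g < 1 ->
  1 <= KK g /\ KK g <= 3 / 2.
Proof.
move=> g0 g1; have u1 := ginv_gt1 g0 g1; have X1 := XX_gt1 g0 g1.
have X0 : 0 < XX g by lra.
have h3 : (3 : R)^-1 * 3 = 1 by rewrite mulVf //; apply/eqP; lra.
rewrite /KK /EE; split.
  rewrite ler_pdivlMr // mul1r /XX.
  have : 3^-1 < 1 :> R by rewrite invf_lt1 //; lra.
  lra.
rewrite ler_pdivrMr // /XX. 
have : 3^-1 = 1/3 :> R by rewrite mul1r.
move=> ->. 
have -> : 3 / 2 * (g^-1 + 1/3) = (3/2) * g^-1 + 1/2 :> R.
  by field; apply/eqP; lra.
lra.
Qed.

Lemma fin_k0 (R : realFieldType) (g Ts P r L : R) :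
  0 < g -> g < 1 -> 0 < Ts -> 2 * r <= g * P -> 0 <= P -> P <= g^-1 * Ts ->
  L <= KK g * Ts + (1 - g) * P + r -> L <= EE g * Ts.
Proof.
move=> g0 g1 T0 hr P0 Pl hL.
have [_ K32] := KK_bounds g0 g1.
have h1 : (1 - g / 2) * P <= (1 - g/2) * (g^-1 * Ts).
  by apply: ler_wpM2l => //; lra.
have h2 : (1 - g/2) * (g^-1 * Ts) = g^-1 * Ts - Ts / 2.
  by field; apply/eqP; lra.
have h3 : KK g * Ts <= 3/2 * Ts by apply: ler_wpM2r; lra.
rewrite /EE mulrDl mul1r.
have : L <= KK g * Ts + (1 - g / 2) * P.
  have -> : (1 - g/2) * P = (1 - g) * P + (g * P) / 2 by field.
  lra.
lra.
Qed.

Lemma fin_k1 (R : realFieldType) (g Ts O N r : R) :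
  0 < g -> g < 1 -> 0 <= Ts ->
  g * N <= KK g * Ts - O + r -> r <= O -> 2 * r <= KK g * Ts - O ->
  O + N <= EE g * Ts.
Proof.
move=> g0 g1 T0 hN hr1 hr2.
set C := KK g * Ts in hN hr2 *.
have u1 := ginv_gt1 g0 g1.
have hN' : N <= g^-1 * (C - O + r).
  rewrite -(ler_pM2l g0) mulrA mulfV ?mul1r //; lra.
have -> : EE g * Ts = XX g * C by rewrite /C mulrA -[XX g * _]mulrC KX.
rewrite /XX.
suff : g^-1 * r <= (g^-1 - 1) * O + C / 3.
  have e1 : g^-1 * (C - O + r) = g^-1 * C - g^-1 * O + g^-1 * r by ring.
  have -> : (g^-1 + 3^-1) * C = g^-1 * C + C / 3 by ring.
  rewrite e1 in hN'.
  move=> h; have e3 : (g^-1 - 1) * O = g^-1 * O - O by ring.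
  rewrite e3 in h; lra.
have [hO|hO] := lerP O (C / 3).
  have : g^-1 * r <= g^-1 * O by apply: ler_wpM2l; lra.
  have -> : (g^-1 - 1) * O = g^-1 * O - O by ring.
  lra.
have h1 : g^-1 * r <= g^-1 * ((C - O) / 2).
  by apply: ler_wpM2l; [lra | rewrite ler_pdivlMr //; lra].
have h2 : (3/2 * g^-1 - 1) * (C/3) <= (3/2 * g^-1 - 1) * O.
  by apply: ler_wpM2l; lra.
have -> : (g^-1 - 1) * O = (3/2 * g^-1 - 1) * O - g^-1 * O / 2 by field; apply/eqP; lra.
have e1 : g^-1 * ((C - O) / 2) = g^-1 * C / 2 - g^-1 * O / 2 by field; apply/eqP; lra.
rewrite e1 in h1.
have e2 : (3/2 * g^-1 - 1) * (C/3) = g^-1 * C / 2 - C / 3 by field; apply/eqP; lra.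
rewrite e2 in h2.
lra.
Qed.

Record MInv (R : realFieldType) (p : nat -> R) (g T si : R)
  (O N : seq nat) (pi A : R) (k : nat) : Prop := MI {
 mi1 : SS p O + SS p N - (1 - g) * A - pi <= KK g * T * si;
 mi2 : 0 <= pi;
 mi3 : pi <= g * A;
 mi4 : A <= SS p N;
 mi5 : forall x, x \in O -> pi < p x;
 mi6 : SS p O + SS p N <= EE g * T * si;
 mi7 : k = 0%N -> pi = 0 /\ A = 0;
 mi8 : (0 < k)%N -> forall x, x \in O -> p x <= KK g * T * si - SS p O;
 mi9 : (1 < k)%N -> forall x, x \in O -> 2 * p x <= KK g * T * si - SS p O }.

Lemma MI_O_le (R : realFieldType) (p : nat -> R) g T si O N pi A k :
  0 < g -> g < 1 ->
  MInv p g T si O N pi A k -> SS p O <= KK g * T * si.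
Proof.
move=> g0 g1 [h1 h2 h3 h4 _ _ _ _ _].
have e : (1 - g) * A = A - g * A by ring.
rewrite e in h1; lra.
Qed.

Lemma MI_move (R : realFieldType) (p : nat -> R) g T si O N pi A k (a : pred nat) :
  (forall k, 0 < p k) ->
  MInv p g T si O N pi A k ->
  MInv p g T si [seq x <- O | ~~ a x] (N ++ [seq x <- O | a x]) pi A k.
Proof.
move=> pp [h1 h2 h3 h4 h5 h6 h7 h8 h9].
have eO := SS_filter p a O.
have g0 := SS_ge0 [seq x <- O | a x] pp.
constructor => //.
- rewrite SS_cat; lra.
- rewrite SS_cat; have := SS_ge0 N pp; lra.
- by move=> x; rewrite mem_filter => /andP [_ /h5].
- rewrite SS_cat; lra.
- move=> k0 x; rewrite mem_filter => /andP [_ xO]; have := h8 k0 x xO; lra.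
- move=> k0 x; rewrite mem_filter => /andP [_ xO]; have := h9 k0 x xO; lra.
Qed.

Lemma MI_raise (R : realFieldType) (p : nat -> R) g T si O N pi A k :
  (forall k, 0 < p k) -> 0 < g -> g < 1 -> 0 < T -> 0 < si ->
  MInv p g T si O N pi A k ->
  MInv p g (XX g * T) si (O ++ N) [::] 0 0 0.
Proof.
move=> pp g0 g1 T0 s0 [h1 h2 h3 h4 h5 h6 h7 h8 h9].
have KXe := KX g0 g1.
have X1 := XX_gt1 g0 g1.
have E0 : 0 < EE g by rewrite /EE; have := ginv_gt1 g0 g1; lra.
constructor => //.
all: rewrite ?SS_nil ?mulr0 ?subr0 ?addr0 ?SS_cat //.
- rewrite mulrA KXe; lra.
- apply: (le_trans h6).
  rewrite -!mulrA ler_pM2l // ler_peMl; try lra; apply: mulr_ge0; lra.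
Qed.

Lemma MI_assign (R : realFieldType) (p : nat -> R) g T si O N pi A k j sc :
  (forall k, 0 < p k) -> 0 < g -> g < 1 -> 0 < T -> 0 < si ->
  MInv p g T si O N pi A k ->
  SS p (N ++ [seq x <- O | g * p j <= p x]) < T * si ->
  p j <= g^-1 * T * si ->
  perm_eq sc [seq x <- O | ~~ (g * p j <= p x)] ->
  sorted (fun a b => p b <= p a) sc ->
  MInv p g T si
    [seq x <- [seq x <- O | ~~ (g * p j <= p x)] | x \notin (scan p (g * p j + pi) sc).2]
    ((N ++ [seq x <- O | g * p j <= p x]) ++ [:: j])
    (scan p (g * p j + pi) sc).1 (A + p j) k.+1.
Proof.
move=> pp g0 g1 T0 s0 HI Hns Hel Hperm Hsort.
have HOC := MI_O_le g0 g1 HI.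
case: HI => h1 h2 h3 h4 h5 h6 h7 h8 h9.
set P := p j in Hns Hel Hperm *.
set O1 := [seq x <- O | ~~ (g * P <= p x)] in Hperm *.
set Mv := [seq x <- O | g * P <= p x] in Hns *.
set b := g * P + pi.
set r := scan p b sc.
set O' := [seq x <- O1 | x \notin r.2].
set Ck := KK g * T * si in h1 h8 h9 HOC *.
have P0 : 0 < P := pp j.
have b0 : 0 <= b by rewrite /b; have := mulr_gt0 g0 P0; lra.
have eO : SS p O = SS p Mv + SS p O1 := SS_filter p (fun x => g * P <= p x) O.
set Rm := SS p [seq x <- O1 | x \in r.2].
have eO1 : SS p O1 = Rm + SS p O' := SS_filter p (fun x => x \in r.2) O1.
have Hsum : r.1 + SS p r.2 = b := scan_sum p b sc.
have HRm : SS p r.2 <= Rm.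
  rewrite /Rm -(SS_perm p (perm_filter (fun x => x \in r.2) Hperm)).
  apply: SS_subseq => //; rewrite subseq_filter scan_subseq andbT.
  by apply/allP.
have Hr0 : 0 <= r.1 := scan_ge0 p sc b0.
have Mv0 : 0 <= SS p Mv := SS_ge0 Mv pp.
have N'e : SS p ((N ++ Mv) ++ [:: j]) = SS p N + SS p Mv + P.
  by rewrite !SS_cat SS_cons SS_nil addr0.
have Hhead : forall x, x \in O' -> exists2 y, y \in [seq x <- O1 | x \in r.2] & p x <= p y.
  move=> x; rewrite mem_filter => /andP [xr xO1].
  have xsc : x \in sc by rewrite (perm_mem Hperm).
  case Esc: sc xsc => [|y sc'] // xin.
  have ysc : y \in O1 by rewrite -(perm_mem Hperm) Esc mem_head.
  have yb : p y <= b.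
    move: ysc; rewrite mem_filter => /andP [hy _].
    move: hy; rewrite -ltNge /b; lra.
  have yr : y \in r.2 by rewrite /r Esc; apply: scan_head.
  have Hs : path (fun a b => p b <= p a) y sc' by move: Hsort; rewrite Esc.
  exists y; first by rewrite mem_filter yr ysc.
  move: xin; rewrite inE => /orP [/eqP ->|xs]; first by [].
  have := order_path_min (leT := fun a b => p b <= p a) _ Hs.
  move=> /(_ _) /allP; apply => //.
  by move=> u v w /= h1' h2'; apply: le_trans h1'.
have HRmy : forall y, y \in [seq x <- O1 | x \in r.2] -> p y <= Rm.
  by move=> y hy; apply: SS_mem.
have n1 : SS p O' + SS p ((N ++ Mv) ++ [:: j]) - (1 - g) * (A + P) - r.1 <= Ck.
  rewrite N'e.
  have e : (1 - g) * (A + P) = (1 - g) * A + P - g * P by ring.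
  rewrite e; rewrite /b in Hsum; lra.
have n4 : A + P <= SS p ((N ++ Mv) ++ [:: j]) by rewrite N'e; lra.
have n9 : (1 < k.+1)%N -> forall x, x \in O' -> 2 * p x <= Ck - SS p O'.
  move=> hk x xO'; have [y yin pxy] := Hhead x xO'.
  have := HRmy y yin.
  have xO : x \in O by move: xO'; rewrite !mem_filter => /andP [_ /andP [_ ->]].
  have := h8 hk x xO; rewrite -/Ck; lra.
have n5 : forall x, x \in O' -> r.1 < p x.
  move=> x; rewrite mem_filter => /andP [xr xO1].
  apply: scan_skip => //; by rewrite (perm_mem Hperm).
constructor => //.
- rewrite /b in Hsum; have := mulr_ge0 (ltW g0) (ltW P0); have := scan_le b sc pp.
  rewrite -/r /b; have e : g * (A + P) = g * A + g * P by ring.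
  rewrite e; lra.
-
  case HO': O' => [|x l].
    rewrite SS_nil add0r.
    have e : EE g * T * si = T * si + g^-1 * T * si by rewrite /EE; ring.
    rewrite e N'e; rewrite SS_cat in Hns; lra.
  have xO' : x \in O' by rewrite HO' mem_head.
  rewrite -HO'.
  have [y yin pxy] := Hhead x xO'.
  have rx := n5 x xO'.
  case: (posnP k) => [k0|kp].
    have [pi0 A0] := h7 k0.
    have hry : 2 * r.1 <= g * P.
      have yr2 : y \in r.2 by move: yin; rewrite mem_filter => /andP [].
      have := SS_mem pp yr2; rewrite /b pi0 addr0 in Hsum; lra.
    rewrite -mulrA; apply: (fin_k0 g0 g1 _ hry (ltW P0)).
    + exact: mulr_gt0.
    + by rewrite mulrA.
    + rewrite mulrA -/Ck; move: n1; rewrite A0 add0r; lra.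
  rewrite -mulrA; apply: (fin_k1 (O := SS p O') (r := r.1) g0 g1 (ltW (mulr_gt0 T0 s0))).
  + rewrite mulrA -/Ck.
    have e : SS p O' + g * SS p ((N ++ Mv) ++ [:: j]) - r.1 =
      SS p O' + SS p ((N ++ Mv) ++ [:: j]) - (1 - g) * SS p ((N ++ Mv) ++ [:: j]) - r.1 by ring.
    have : (1 - g) * (A + P) <= (1 - g) * SS p ((N ++ Mv) ++ [:: j]).
      by apply: ler_wpM2l; lra.
    lra.
  + have := SS_mem pp xO'; lra.
  + rewrite mulrA -/Ck; have := n9 kp x xO'; lra.
- move=> _ x xO'; have [y yin pxy] := Hhead x xO'.
  have := HRmy y yin; rewrite -/Ck; lra.
Qed.

Definition Inv (R : realFieldType) (m : nat) (s : 'I_m.+1 -> R) (p : nat -> R) (g : R)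
  (st : state R m) : Prop :=
  0 < guess st /\ exists (A : 'I_m.+1 -> R) (k : 'I_m.+1 -> nat),
    forall i, MInv p g (guess st) (s i) (old_jobs st i) (new_jobs st i) (pot st i) (A i) (k i).

Lemma sum_div (R : realFieldType) (p : nat -> R) (l : seq nat) (x : R) :
  \sum_(j <- l) p j / x = SS p l / x.
Proof. by rewrite /SS mulr_suml. Qed.

Lemma Inv_step (R : realFieldType) (m : nat) (s : 'I_m.+1 -> R) (p : nat -> R) (g : R) st st' :
  (forall i, 0 < s i) -> (forall j, 0 < p j) -> 0 < g -> g < 1 ->
  Inv s p g st -> step s p g g^-1 (g^-1 + 3^-1) st st' -> Inv s p g st'.
Proof.
move=> s0 pp g0 g1 Hinv Hst.
case: Hst Hinv.
- by [].
- by [].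
- move=> T hJ cJ pi Q n j _ [/= T0 [A [k HM]]]; split => /=.
    by apply: mulr_gt0 => //; have := XX_gt1 g0 g1; rewrite /XX; lra.
  exists (fun _ => 0), (fun _ => 0%N) => i.
  exact: (MI_raise pp g0 g1 T0 (s0 i) (HM i)).
- move=> T hJ cJ pi Q n j i st0 Hc Hmin hJ' cJ' Hsat [/= T0 [A [k HM]]]; split => //=.
  exists A, k => i2; rewrite /hJ' /cJ' /upd.
  case: eqP => [->|_]; last exact: HM.
  exact: (MI_move _ pp (HM i)).
- move=> T hJ cJ pi Q n j i sc st0 Hc Hmin hJ' cJ' Hns Hperm Hsort r [/= T0 [A [k HM]]].
  split => //=.
  exists (upd A i (A i + p j)), (upd k i (k i).+1) => i2; rewrite /r /hJ' /cJ' /upd.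
  case: eqP => [->|_]; last exact: HM.
  move: Hc Hns Hperm; rewrite /cand /eligible /saturated /new_load /= /cJ' /hJ' /upd eqxx.
  rewrite invrK !sum_div => /andP [Hel _] Hns Hperm.
  apply: (MI_assign pp g0 g1 T0 (s0 i) (HM i)) => //.
  + by move: Hns; rewrite -ltNge ltr_pdivrMr.
  + by move: Hel; rewrite ler_pdivrMr.
Qed.

Lemma Inv_init (R : realFieldType) (m : nat) (s : 'I_m.+1 -> R) (p : nat -> R) (g : R) :
  (forall i, 0 < s i) -> (forall j, 0 < p j) -> 0 < g -> g < 1 ->
  Inv s p g (init_state s p).
Proof.
move=> s0 pp g0 g1; rewrite /Inv /init_state /=.
have T0 : 0 < p 0%N / s ord0 by rewrite divr_gt0.
split => //; exists (fun _ => 0), (fun _ => 0%N) => i.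
have [K1 _] := KK_bounds g0 g1.
have E1 : 1 <= EE g by rewrite /EE; have := ginv_gt1 g0 g1; lra.
have Ts0 : 0 < p 0%N / s ord0 * s i by apply: mulr_gt0.
constructor => //; rewrite ?SS_nil ?mulr0 ?subr0 ?add0r //.
- case: eqP => [->|_]; rewrite ?SS_cons ?SS_nil.
    rewrite addr0 -mulrA divfK; last by have := s0 ord0; lra.
    by have := pp 0%N; nra.
  rewrite -mulrA; apply: mulr_ge0; first lra. apply: ltW; exact: Ts0.
- by case: eqP => _; rewrite ?SS_cons ?SS_nil ?addr0 //; apply: ltW.
- case: eqP => [->|_]; rewrite ?SS_cons ?SS_nil.
    rewrite addr0 -mulrA divfK; last by have := s0 ord0; lra.
    by have := pp 0%N; nra.
  rewrite -mulrA; apply: mulr_ge0; first lra. apply: ltW; exact: Ts0.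
Qed.

Theorem lemma8 (R : realFieldType) (m : nat) (s : 'I_m.+1 -> R) (p : nat -> R)
  (gamma : R) :
  (forall i, 0 < s i) ->
  (forall i j : 'I_m.+1, (i <= j)%N -> s j <= s i) ->
  (forall j, 0 < p j) ->
  0 < gamma -> gamma < 1 ->
  forall st : state R m,
    reachable s p gamma gamma^-1 (gamma^-1 + 3^-1) st ->
    forall i : 'I_m.+1,
      load s p st i <= (1 + gamma^-1) * guess st.
Proof.
move=> s0 _ pp g0 g1 st Hr.
have : Inv s p gamma st.
  elim: Hr => [|st1 st2 _ IH Hst]; first exact: Inv_init.
  exact: (Inv_step s0 pp g0 g1 IH Hst).
move=> [T0 [A [k HM]]] i.
have [_ _ _ _ _ h6 _ _ _] := HM i.
rewrite /load sum_div ler_pdivrMr // SS_cat.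
by move: h6; rewrite /EE.
Qed.
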